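(* Let $R$ be a ring and $M$ a subprojective extension-reflecting right $R$-module. Then: (1) $M\in \underline{\mathfrak{Pr}}^{-1}(S)$ for every simple right $R$-module $S$ if and only if $M\in \underline{\mathfrak{Pr}}^{-1}(A)$ for every right $R$-module $A$ of finite composition length; (2) $M\in \underline{\mathfrak{Pr}}^{-1}(N)$ for every cyclic right $R$-module $N$ if and only if $M\in \underline{\mathfrak{Pr}}^{-1}(N)$ for every finitely generated right $R$-module $N$.
   Context: Modules are unital right $R$-modules. For modules $X,Y$, $X\in \underline{\mathfrak{Pr}}^{-1}(Y)$ means: for every epimorphism $g\colon B\to X$ and every homomorphism $f\colon Y\to X$ there exists $h\colon Y\to B$ with $gh=f$. A module $M$ is subprojective extension-reflecting if for every short exact sequence $0\to A\to B\to C\to 0$ of right $R$-modules, $M\in \underline{\mathfrak{Pr}}^{-1}(A)\cap \underline{\mathfrak{Pr}}^{-1}(C)$ implies $M\in \underline{\mathfrak{Pr}}^{-1}(B)$. *)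

(* Defs.v *)
(* Right R-modules are modelled as left modules over the
   converse ring R^c : for m : M and r : R, the right action m.r is r *: m. *)
From HB Require Import structures.
From mathcomp Require Import all_boot all_algebra.
Set Implicit Arguments. Unset Strict Implicit. Unset Printing Implicit Defensive.
Import GRing.Theory.
Local Open Scope ring_scope.

Section Defs.
Variable R : pzRingType.

Notation rmod := (lmodType R^c).

Definition PrInv (X Y : rmod) : Prop :=
  forall (B : rmod) (g : {linear B -> X}) (f : {linear Y -> X}),
    (forall x : X, exists b : B, g b = x) -> exists h : {linear Y -> B}, forall y, g (h y) = f y.

Definition short_exact (A B C : rmod) (i : {linear A -> B}) (p : {linear B -> C}) : Prop :=
  injective i /\ (forall c : C, exists b : B, p b = c) /\ (forall b, p b = 0 <-> exists a, i a = b).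

Definition subprojective_extension_reflecting (M : rmod) : Prop :=
  forall (A B C : rmod) (i : {linear A -> B}) (p : {linear B -> C}),
    short_exact i p -> PrInv M A -> PrInv M C -> PrInv M B.

Definition submodule (A : rmod) (P : A -> Prop) : Prop :=
  P 0 /\ (forall x y, P x -> P y -> P (x + y)) /\ (forall (r : R^c) x, P x -> P (r *: x)).

Definition simple_module (S : rmod) : Prop :=
  (exists x : S, x <> 0) /\
  forall P : S -> Prop, submodule P -> (forall x, P x -> x = 0) \/ (forall x, P x).

(* finite composition length: a finite chain of submodules
   0 = P_0 < P_1 < ... < P_n = A with each P_(k+1)/P_k simple, i.e. P_k is
   properly contained in P_(k+1) with no submodule strictly in between. *)
Definition finite_length (A : rmod) : Prop :=
  exists (n : nat) (P : nat -> A -> Prop),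
    (forall k, submodule (P k)) /\
    (forall x, P 0%N x <-> x = 0) /\
    (forall x, P n x) /\
    (forall k, (k < n)%N ->
       (forall x, P k x -> P k.+1 x) /\ (exists x, P k.+1 x /\ ~ P k x) /\
       (forall Q : A -> Prop, submodule Q ->
          (forall x, P k x -> Q x) -> (forall x, Q x -> P k.+1 x) ->
          (forall x, Q x <-> P k x) \/ (forall x, Q x <-> P k.+1 x))).

Definition cyclic_module (N : rmod) : Prop :=
  exists x : N, forall y : N, exists r : R^c, y = r *: x.

Definition finitely_generated (N : rmod) : Prop :=
  exists s : seq N, forall y : N, exists c : 'I_(size s) -> R^c,
    y = \sum_(i < size s) c i *: s`_i.

End Defs.

(* Main.v *)
Require Import Defs.
From HB Require Import structures.
From mathcomp Require Import all_boot all_algebra.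
From Stdlib Require Import ClassicalEpsilon.
Set Implicit Arguments. Unset Strict Implicit. Unset Printing Implicit Defensive.
Import GRing.Theory.

Section Constr.
Local Open Scope ring_scope.

Variable R : pzRingType.
Variable A : lmodType R^c.
Variable P : A -> Prop.
Hypothesis HP : submodule P.

Definition Pb (x : A) : bool := if excluded_middle_informative (P x) then true else false.
Lemma PbP x : reflect (P x) (Pb x).
Proof. rewrite /Pb; case: excluded_middle_informative => h; by constructor. Qed.

Lemma P0 : P 0. Proof. by case: HP. Qed.
Lemma PD x y : P x -> P y -> P (x + y). Proof. by case: HP => _ [D _]; apply: D. Qed.
Lemma PZ (r : R^c) x : P x -> P (r *: x). Proof. by case: HP => _ [_ Z]; apply: Z. Qed.
Lemma PN x : P x -> P (- x).
Proof. move=> h; have -> : - x = (-1 : R^c) *: x by rewrite scaleN1r. exact: PZ. Qed.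
Lemma PB x y : P x -> P y -> P (x - y). Proof. by move=> h1 h2; apply: PD => //; apply: PN. Qed.

Definition ST := {x : A | Pb x}.
HB.instance Definition _ := Choice.copy ST {x : A | Pb x}.
Lemma Pb0 : Pb 0. Proof. apply/PbP; exact: P0. Qed.
Lemma PbD (x y : ST) : Pb (val x + val y).
Proof. apply/PbP; apply: PD; apply/PbP; exact: valP. Qed.
Lemma PbN (x : ST) : Pb (- val x).
Proof. apply/PbP; apply: PN; apply/PbP; exact: valP. Qed.
Lemma PbZ r (x : ST) : Pb (r *: val x).
Proof. apply/PbP; apply: PZ; apply/PbP; exact: valP. Qed.
Definition st0 : ST := Sub 0 Pb0.
Definition stD (x y : ST) : ST := Sub _ (PbD x y).
Definition stN (x : ST) : ST := Sub _ (PbN x).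
Definition stZ r (x : ST) : ST := Sub _ (PbZ r x).
Lemma stA : associative stD. Proof. by move=> x y z; apply: val_inj; rewrite /= addrA. Qed.
Lemma stC : commutative stD. Proof. by move=> x y; apply: val_inj; rewrite /= addrC. Qed.
Lemma st0r : left_id st0 stD. Proof. by move=> x; apply: val_inj; rewrite /= add0r. Qed.
Lemma stNr : left_inverse st0 stN stD. Proof. by move=> x; apply: val_inj; rewrite /= addNr. Qed.
HB.instance Definition _ := GRing.isZmodule.Build ST stA stC st0r stNr.
Lemma stZA a b v : stZ a (stZ b v) = stZ (a * b) v.
Proof. by apply: val_inj; rewrite /= scalerA. Qed.
Lemma stZ1 : left_id 1 stZ. Proof. by move=> x; apply: val_inj; rewrite /= scale1r. Qed.
Lemma stZDr : right_distributive stZ +%R.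
Proof. by move=> a x y; apply: val_inj; rewrite /= scalerDr. Qed.
Lemma stZDl v : {morph stZ^~ v: a b / a + b}.
Proof. by move=> a b; apply: val_inj; rewrite /= scalerDl. Qed.
HB.instance Definition _ := GRing.Zmodule_isLmodule.Build R^c ST stZA stZ1 stZDr stZDl.
Definition incl (x : ST) : A := val x.
Lemma incl_lin : linear incl.
Proof. by []. Qed.
HB.instance Definition _ := GRing.isLinear.Build R^c ST A *:%R incl incl_lin.


Lemma PbP' x : Pb x -> P x. Proof. by move/PbP. Qed.

Definition rel a b := Pb (a - b).
Lemma ex_rel a : exists b, rel a b.
Proof. exists a; rewrite /rel subrr; exact: Pb0. Qed.
Definition rep a := xchoose (ex_rel a).
Lemma repP a : P (a - rep a).
Proof. apply/PbP; exact: (xchooseP (ex_rel a)). Qed.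
Lemma repP' a : P (rep a - a).
Proof. rewrite -opprB; apply: PN; exact: repP. Qed.
Lemma rep_eq a b : P (a - b) -> rep a = rep b.
Proof.
move=> h; apply: eq_xchoose => c; rewrite /rel.
apply/idP/idP => /PbP hc; apply/PbP.
- have -> : b - c = (a - c) - (a - b) by rewrite opprB [RHS]addrC addrA subrK.
  exact: PB.
- have -> : a - c = (a - b) + (b - c) by rewrite addrA subrK.
  exact: PD.
Qed.
Lemma repK a : rep (rep a) = rep a.
Proof. apply: rep_eq; exact: repP'. Qed.

Definition QT := {a : A | rep a == a}.
HB.instance Definition _ := Choice.copy QT {a : A | rep a == a}.
HB.instance Definition _ := SubType.copy QT {a : A | rep a == a}.
Definition mk a : QT := exist (fun x => rep x == x) (rep a) (introT eqP (repK a)).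
Lemma mkE a b : P (a - b) -> mk a = mk b.
Proof. by move=> h; apply: val_inj; rewrite /= (rep_eq h). Qed.
Lemma mk_val (x : QT) : mk (val x) = x.
Proof. by apply: val_inj; rewrite /= (eqP (valP x)). Qed.
Definition q0 := mk 0.
Definition qD (x y : QT) := mk (val x + val y).
Definition qN (x : QT) := mk (- val x).
Definition qZ (r : R^c) (x : QT) := mk (r *: val x).
Lemma qD_mk a b : qD (mk a) (mk b) = mk (a + b).
Proof.
apply: mkE => /=; rewrite opprD addrACA; apply: PD; exact: repP'.
Qed.
Lemma qN_mk a : qN (mk a) = mk (- a).
Proof. apply: mkE => /=; rewrite opprK addrC; exact: repP. Qed.
Lemma qZ_mk r a : qZ r (mk a) = mk (r *: a).
Proof. apply: mkE => /=; rewrite -scalerBr; apply: PZ; exact: repP'. Qed.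

Lemma qA : associative qD.
Proof. by move=> x y z; rewrite -(mk_val x) -(mk_val y) -(mk_val z) !qD_mk addrA. Qed.
Lemma qC : commutative qD.
Proof. by move=> x y; rewrite -(mk_val x) -(mk_val y) !qD_mk addrC. Qed.
Lemma q0r : left_id q0 qD.
Proof. by move=> x; rewrite -(mk_val x) /q0 qD_mk add0r. Qed.
Lemma qNr : left_inverse q0 qN qD.
Proof. by move=> x; rewrite -(mk_val x) qN_mk qD_mk addNr. Qed.
HB.instance Definition _ := GRing.isZmodule.Build QT qA qC q0r qNr.
Lemma mkD a b : mk a + mk b = mk (a + b). Proof. exact: qD_mk. Qed.
Lemma qZA a b v : qZ a (qZ b v) = qZ (a * b) v.
Proof. by rewrite -(mk_val v) !qZ_mk scalerA. Qed.
Lemma qZ1 : left_id 1 qZ.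
Proof. by move=> x; rewrite -(mk_val x) !qZ_mk scale1r. Qed.
Lemma qZDr : right_distributive qZ +%R.
Proof.
move=> a x y; rewrite -(mk_val x) -(mk_val y).
by rewrite mkD !qZ_mk mkD scalerDr.
Qed.
Lemma qZDl v : {morph qZ^~ v: a b / a + b}.
Proof. by move=> a b; rewrite -(mk_val v) !qZ_mk mkD scalerDl. Qed.
HB.instance Definition _ := GRing.Zmodule_isLmodule.Build R^c QT qZA qZ1 qZDr qZDl.
Lemma mkZ r a : r *: mk a = mk (r *: a). Proof. exact: qZ_mk. Qed.
Lemma mk_lin : linear mk.
Proof. by move=> r u v; rewrite mkZ mkD. Qed.
HB.instance Definition _ := GRing.isLinear.Build R^c A QT *:%R mk mk_lin.

Lemma sub_quot : exists (S Q : lmodType R^c) (i : {linear S -> A}) (p : {linear A -> Q}),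
  short_exact i p /\ (forall a, p a = 0 <-> P a).
Proof.
have ker a : mk a = 0 <-> P a.
  split=> [h|h]; last by apply: mkE; rewrite subr0.
  have /(congr1 val) /= e : mk a = mk 0 by [].
  have -> : a = (a - rep a) + (rep 0 - 0) by rewrite e subr0 subrK.
  apply: PD; [exact: repP | exact: repP'].
exists ST, QT, (incl : {linear _ -> _}), (mk : {linear _ -> _}); split => //.
split; first exact: val_inj.
split; first by move=> c; exists (val c); exact: mk_val.
move=> b; split.
- move=> /ker /PbP hb; exists (Sub b hb); by [].
- move=> [a <-]; apply/ker; apply/PbP; exact: valP.
Qed.

End Constr.

Section Main.
Local Open Scope ring_scope.

Variable R : pzRingType.
Variable M : lmodType R^c.

Lemma triv_PrInv (A : lmodType R^c) : (forall x : A, x = 0) -> PrInv M A.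
Proof.
move=> h B g f _; exists \0 => y; by rewrite (h y) !linear0.
Qed.

Lemma simple_fl (S : lmodType R^c) : simple_module S -> finite_length S.
Proof.
move=> [[x0 hx0] hS].
exists 1%N, (fun k (x : S) => (k == 0%N) -> x = 0); split.
  move=> k; split; first by [].
  split; first by move=> x y hx hy /[dup] /hx -> /hy ->; rewrite addr0.
  by move=> r x hx /hx ->; rewrite scaler0.
split; first by move=> x; split; [apply | move=> ->].
split; first by [].
move=> k; rewrite ltnS leqn0 => /eqP ->; split; first by [].
split; first by exists x0; split => // /(_ isT).
move=> Q hQ _ _; case: (hS Q hQ) => hQ'; [left|right] => x; split => //.
- by move/hQ'.
- by move=> /(_ isT) ->; case: hQ.
Qed.

Lemma cyc_fg (N : lmodType R^c) : cyclic_module N -> finitely_generated N.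
Proof.
move=> [x hx]; exists [:: x] => y; have [r ->] := hx y.
by exists (fun _ => r); rewrite big_ord1.
Qed.


Lemma chain_mono (A : lmodType R^c) (n : nat) (P : nat -> A -> Prop) :
  (forall k, (k < n)%N -> forall x, P k x -> P k.+1 x) ->
  forall k j x, (k <= j)%N -> (j <= n)%N -> P k x -> P j x.
Proof.
move=> hinc k j x; elim: j => [|j IH].
  by rewrite leqn0 => /eqP -> .
rewrite leq_eqVlt => /orP [/eqP -> //| hkj] hjn hx.
by apply: hinc => //; apply: IH => //; apply: ltnW.
Qed.

Hypothesis hSER : subprojective_extension_reflecting M.

Lemma fl_PrInv : (forall S : lmodType R^c, simple_module S -> PrInv M S) ->
  forall n (A : lmodType R^c) (P : nat -> A -> Prop),
    (forall k, submodule (P k)) ->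
    (forall x, P 0%N x <-> x = 0) ->
    (forall x, P n x) ->
    (forall k, (k < n)%N ->
       (forall x, P k x -> P k.+1 x) /\ (exists x, P k.+1 x /\ ~ P k x) /\
       (forall Q : A -> Prop, submodule Q ->
          (forall x, P k x -> Q x) -> (forall x, Q x -> P k.+1 x) ->
          (forall x, Q x <-> P k x) \/ (forall x, Q x <-> P k.+1 x))) ->
    PrInv M A.
Proof.
move=> hsimp; elim=> [|n IH] A P hsub h0 hn hk.
  by apply: triv_PrInv => x; apply/h0/hn.
have [S [Q [i [p [hse hker]]]]] := sub_quot (hsub n).
have [iinj [psurj pex]] := hse.
have hIm s : P n (i s) by apply/hker; apply/pex; exists s.
have hIm' a : P n a -> exists s, i s = a by move=> h; apply/pex; apply/hker.
have mono k x : (k <= n)%N -> P k x -> P n x.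
  move=> hkn; apply: (chain_mono (n := n.+1)) => //.
  by move=> j hj; case: (hk j hj).
apply: (hSER hse).
- apply: (IH S (fun k s => P k (i s))).
  + move=> k; case: (hsub k) => Z0 [D Z]; split; first by rewrite linear0.
    split; first by move=> x y hx hy; rewrite linearD; apply: D.
    by move=> r x hx; rewrite linearZZ; apply: Z.
  + move=> x; rewrite h0; split => [e|->]; last exact: linear0.
    by apply: iinj; rewrite e linear0.
  + exact: hIm.
  + move=> k hkn; have [hinc [[x [hx1 hx0]] hmax]] := hk k (ltnW hkn).
    split; first by move=> s; apply: hinc.
    split.
      have [s es] := hIm' x (mono _ _ hkn hx1).
      by exists s; rewrite es.
    move=> Qs hQs hlo hhi.
    pose Q' a := exists s, i s = a /\ Qs s.
    have sQ' : submodule Q'.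
      case: hQs => Z0 [D Z].
      split; first by exists 0; split => //; exact: linear0.
      split.
        move=> a b [s [<- hs]] [t [<- ht]]; exists (s + t); split; last exact: D.
        exact: linearD.
      move=> r a [s [<- hs]]; exists (r *: s); split; last exact: Z.
      exact: linearZZ.
    have := hmax Q' sQ'.
    case.
    * move=> a ha; have [s es] := hIm' a (mono _ _ (ltnW hkn) ha).
      by exists s; split => //; apply: hlo; rewrite es.
    * by move=> a [s [<- hs]]; apply: hhi.
    * move=> e; left => s; rewrite -e; split; first by move=> hs; exists s.
      by move=> [t [/iinj -> ht]].
    * move=> e; right => s; rewrite -e; split; first by move=> hs; exists s.
      by move=> [t [/iinj -> ht]].
- apply: hsimp; have [_ [[x [hx1 hx0]] hmax]] := hk n (ltnSn n).
  split; first by exists (p x) => /hker.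
  move=> Qq hQq; pose Q' a := Qq (p a).
  have sQ' : submodule Q'.
    case: hQq => Z0 [D Z]; rewrite /Q'.
    split; first by rewrite linear0.
    split; first by move=> a b ha hb; rewrite linearD; apply: D.
    by move=> r a ha; rewrite linearZZ; apply: Z.
  have := hmax Q' sQ'.
  case.
  + by move=> a /hker ha; rewrite /Q' ha; case: hQq.
  + by move=> a _; apply: hn.
  + move=> e; left => y; case: (psurj y) => a ea; subst y.
    by move=> /e /hker.
  + move=> e; right => y; case: (psurj y) => a ea; subst y.
    by apply/e; apply: hn.
Qed.


Lemma fg_PrInv : (forall N : lmodType R^c, cyclic_module N -> PrInv M N) ->
  forall n (N : lmodType R^c) (s : seq N), size s = n ->
  (forall y, exists c : nat -> R^c, y = \sum_(i < size s) c i *: s`_i) ->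
  PrInv M N.
Proof.
move=> hcyc; elim=> [|n IH] N s hs hgen.
  apply: triv_PrInv => y; have [c ->] := hgen y.
  by rewrite hs big_ord0.
case: s hs hgen => [//|x s] /= [hs] hgen.
pose P a := exists r : R^c, a = r *: x.
have sP : submodule P.
  split; first by exists 0; rewrite scale0r.
  split; first by move=> a b [r ->] [t ->]; exists (r + t); rewrite scalerDl.
  by move=> r a [t ->]; exists (r * t); rewrite scalerA.
have [S [Q [i [p [hse hker]]]]] := sub_quot sP.
have [iinj [psurj pex]] := hse.
have hIm s0 : P (i s0) by apply/hker; apply/pex; exists s0.
have hIm' a : P a -> exists s0, i s0 = a by move=> h; apply/pex; apply/hker.
apply: (hSER hse).
- apply: hcyc.
  have [s0 es0] := hIm' x (ex_intro _ 1 (esym (scale1r x))).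
  exists s0 => y; have [r er] := hIm y; exists r.
  by apply: iinj; rewrite linearZZ es0.
- apply: (IH Q (map p s)); first by rewrite size_map.
  move=> y; case: (psurj y) => a ea; subst y.
  have [c ->] := hgen a.
  exists (fun k => c k.+1).
  have px : p x = 0 by apply/hker; exists 1; rewrite scale1r.
  rewrite big_ord_recl /= linearD.
  rewrite linearZZ px scaler0 add0r raddf_sum size_map.
  apply: eq_bigr => j _; rewrite add0n /bump /= add1n (linearZZ p (c j.+1) s`_j).
  by rewrite -(linear0 p) (nth_map 0).
Qed.

End Main.


Unset Implicit Arguments.

Theorem mainTheorem6 (R : pzRingType) (M : lmodType R^c) :
  subprojective_extension_reflecting M ->
  ((forall S : lmodType R^c, simple_module S -> PrInv M S) <->
   (forall A : lmodType R^c, finite_length A -> PrInv M A)) /\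
  ((forall N : lmodType R^c, cyclic_module N -> PrInv M N) <->
   (forall N : lmodType R^c, finitely_generated N -> PrInv M N)).
Proof.
move=> hSER; split; split.
- move=> hsimp A [n [P [hsub [h0 [hn hk]]]]].
  exact: (fl_PrInv hSER hsimp hsub h0 hn hk).
- by move=> h S hS; apply: h; apply: simple_fl.
- move=> hcyc N [s hs]; apply: (fg_PrInv hSER hcyc (s := s) erefl).
  move=> y; have [c ->] := hs y.
  exists (fun k => if (insub k : option 'I_(size s)) is Some i then c i else 0%R).
  by apply: eq_bigr => i _; rewrite valK.
- by move=> h N hN; apply: h; apply: cyc_fg.
Qed.
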